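(* Let $\pi^0,\pi^1,\gamma>0$, $\mathrm{E}^{\mathrm{bau}}=\bm{q^{\mathrm{bau}}}=\pi^0/\pi^1$, $\mathcal{W}^{\mathrm{bau}}_{\mathrm{C}}=(\pi^0)^2/(2\pi^1)$, $\varrho=1/\pi^1+1/\gamma$, and let $\tau,\lambda>0$ satisfy $\tau\varrho<\mathrm{E}^{\mathrm{bau}}$ and $\lambda\varrho<\mathrm{E}^{\mathrm{bau}}$. Let $0<P<\lambda$. (Tax) The wealth $\pi(q)-c(q,a)-\tau e^{-a}q$ is maximized at $\bm{q^{\mathrm{tax}}}=\bm{q^{\mathrm{bau}}}-\tau/\pi^1$ and $e^{-\bm{a^{\mathrm{tax}}}}=(\mathrm{E}^{\mathrm{bau}}-\tau\varrho)/\bm{q^{\mathrm{tax}}}$, with resulting emissions $\mathrm{E}^{\mathrm{tax}}=e^{-\bm{a^{\mathrm{tax}}}}\bm{q^{\mathrm{tax}}}=\mathrm{E}^{\mathrm{bau}}-\tau\varrho$ and wealth $\mathcal{W}^{\mathrm{tax}}_{\mathrm{C}}=\mathcal{W}^{\mathrm{bau}}_{\mathrm{C}}-\tau(\mathrm{E}^{\mathrm{bau}}-\tfrac\tau2\varrho)$. (Market) The wealth $\pi(q)-c(q,a)-\delta P-\lambda(qe^{-a}-\delta)^+$ is maximized at $\bm{q^{\mathrm{mar}}}=\bm{q^{\mathrm{bau}}}-P/\pi^1$, $e^{-\bm{a^{\mathrm{mar}}}}=(\mathrm{E}^{\mathrm{bau}}-P\varrho)/\bm{q^{\mathrm{mar}}}$,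 $\bm\delta=\mathrm{E}^{\mathrm{bau}}-P\varrho$, with resulting emissions $\mathrm{E}^{\mathrm{mar}}=\mathrm{E}^{\mathrm{bau}}-P\varrho=\bm\delta$ and wealth $\mathcal{W}^{\mathrm{mar}}_{\mathrm{C}}=\mathcal{W}^{\mathrm{bau}}_{\mathrm{C}}-P(\mathrm{E}^{\mathrm{bau}}-\tfrac P2\varrho)$.
   Context: A company producing $q$ units has raw wealth $\pi(q)=\pi^0q-\tfrac{\pi^1}{2}q^2$; its carbon emissions equal $q$, reduced to $e^{-a}q$ by a green technology effort $a$ at cost $c(q,a)=\tfrac\gamma2[(1-e^{-a})q]^2$. Under the tax scheme a tax $\tau$ is paid per unit of emission; under the market scheme the company buys $\delta$ certificates at unit price $P$ and pays a penalty $\lambda$ per unit of emission exceeding $\delta$. The company maximizes its wealth over its decision variables ($q,a$ under tax; $q,a,\delta$ under market), subject to production and wealth being positive. $\mathrm{E}^{\mathrm{bau}},\bm{q^{\mathrm{bau}}},\mathcal{W}^{\mathrm{bau}}_{\mathrm{C}}$ are the business-as-usual (unconstrained) emissions, production and wealth. *)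

(* Defs.v *)
From Stdlib Require Import Reals.
Open Scope R_scope.

Definition raw_wealth (pi0 pi1 q : R) : R := pi0 * q - pi1 / 2 * q ^ 2.

Definition green_cost (gamma q a : R) : R := gamma / 2 * ((1 - exp (- a)) * q) ^ 2.

Definition emissions (q a : R) : R := exp (- a) * q.

Definition pos_part (x : R) : R := Rmax x 0.

Definition E_bau (pi0 pi1 : R) : R := pi0 / pi1.
Definition q_bau (pi0 pi1 : R) : R := pi0 / pi1.
Definition W_bau (pi0 pi1 : R) : R := pi0 ^ 2 / (2 * pi1).
Definition varrho (pi1 gamma : R) : R := 1 / pi1 + 1 / gamma.

Definition wealth_tax (pi0 pi1 gamma tau q a : R) : R :=
  raw_wealth pi0 pi1 q - green_cost gamma q a - tau * emissions q a.

Definition wealth_mar (pi0 pi1 gamma P lambda q a delta : R) : R :=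
  raw_wealth pi0 pi1 q - green_cost gamma q a - delta * P
  - lambda * pos_part (emissions q a - delta).

Definition admissible_tax (pi0 pi1 gamma tau q a : R) : Prop :=
  0 < q /\ 0 < wealth_tax pi0 pi1 gamma tau q a.
Definition admissible_mar (pi0 pi1 gamma P lambda q a delta : R) : Prop :=
  0 < q /\ 0 < wealth_mar pi0 pi1 gamma P lambda q a delta.

(* Main.v *)
Require Import Defs.
From Stdlib Require Import Reals.
Open Scope R_scope.


From Stdlib Require Import Lra Psatz.

Lemma key (p0 p1 g t q e : R) : 0 < p1 -> 0 < g ->
  p0*q - p1/2*q^2 - g/2*(q-e)^2 - t*e =
  W_bau p0 p1 - t*(E_bau p0 p1 - t/2*varrho p1 g)
  - (p1/2*(q - (p0/p1 - t/p1))^2 + g/2*((q-e) - t/g)^2).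
Proof. intros. unfold W_bau, E_bau, varrho. field; lra. Qed.

Lemma bound (p0 p1 g t q e : R) : 0 < p1 -> 0 < g ->
  p0*q - p1/2*q^2 - g/2*(q-e)^2 - t*e <=
  W_bau p0 p1 - t*(E_bau p0 p1 - t/2*varrho p1 g).
Proof.
  intros. rewrite (key p0 p1 g t q e) by assumption.
  assert (0 <= p1/2*(q - (p0/p1 - t/p1))^2).
  { apply Rmult_le_pos. lra. apply pow2_ge_0. }
  assert (0 <= g/2*((q-e) - t/g)^2).
  { apply Rmult_le_pos. lra. apply pow2_ge_0. }
  lra.
Qed.

Lemma wt_eq p0 p1 g t q a :
  wealth_tax p0 p1 g t q a =
  p0*q - p1/2*q^2 - g/2*(q-emissions q a)^2 - t*emissions q a.
Proof. unfold wealth_tax, raw_wealth, green_cost, emissions. ring. Qed.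

Lemma wm_le p0 p1 g P l q a d : 0 < P -> P < l ->
  wealth_mar p0 p1 g P l q a d <= wealth_tax p0 p1 g P q a.
Proof.
  intros. unfold wealth_mar, wealth_tax, pos_part.
  destruct (Rle_dec (emissions q a - d) 0).
  - rewrite Rmax_right by lra. nra.
  - rewrite Rmax_left by lra. nra.
Qed.

Lemma tax_part (p0 p1 g t : R) :
  0 < p0 -> 0 < p1 -> 0 < g -> 0 < t ->
  t * varrho p1 g < E_bau p0 p1 ->
  (let q_tax := q_bau p0 p1 - t / p1 in
   (exists a_tax : R, exp (- a_tax) = (E_bau p0 p1 - t * varrho p1 g) / q_tax) /\
   forall a_tax : R,
     exp (- a_tax) = (E_bau p0 p1 - t * varrho p1 g) / q_tax ->
     admissible_tax p0 p1 g t q_tax a_tax /\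
     (forall q a : R, admissible_tax p0 p1 g t q a ->
        wealth_tax p0 p1 g t q a <= wealth_tax p0 p1 g t q_tax a_tax) /\
     emissions q_tax a_tax = E_bau p0 p1 - t * varrho p1 g /\
     wealth_tax p0 p1 g t q_tax a_tax
       = W_bau p0 p1 - t * (E_bau p0 p1 - t / 2 * varrho p1 g)).
Proof.
  intros H0 H1 Hg Ht Hlt q_tax.
  assert (Hv : t / p1 < t * varrho p1 g).
  { unfold varrho. assert (0 < t/g) by (apply Rdiv_lt_0_compat; lra).
    unfold Rdiv in *. nra. }
  assert (Hq : 0 < q_tax).
  { unfold q_tax. unfold E_bau, q_bau in *. lra. }
  assert (He : 0 < (E_bau p0 p1 - t * varrho p1 g) / q_tax).
  { apply Rdiv_lt_0_compat; lra. }
  assert (Hwf : W_bau p0 p1 - t * (E_bau p0 p1 - t / 2 * varrho p1 g) > 0).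
  { assert (E1 : W_bau p0 p1 - t * (E_bau p0 p1 - t / 2 * varrho p1 g)
       = q_tax^2 * p1 / 2 + t^2/(2*g)).
    { unfold q_tax, W_bau, E_bau, q_bau, varrho. field; lra. }
    rewrite E1. assert (0 < t^2/(2*g)).
    { apply Rdiv_lt_0_compat; nra. }
    nra. }
  split.
  - exists (- ln ((E_bau p0 p1 - t * varrho p1 g) / q_tax)).
    rewrite Ropp_involutive. apply exp_ln. exact He.
  - intros a Ha.
    assert (Em : emissions q_tax a = E_bau p0 p1 - t * varrho p1 g).
    { unfold emissions. rewrite Ha. field. lra. }
    assert (Wq : wealth_tax p0 p1 g t q_tax a
       = W_bau p0 p1 - t * (E_bau p0 p1 - t / 2 * varrho p1 g)).
    { rewrite wt_eq, Em. rewrite key by lra.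
      assert (A1 : q_tax - (p0/p1 - t/p1) = 0).
      { unfold q_tax, q_bau. lra. }
      assert (A2 : (q_tax - (E_bau p0 p1 - t * varrho p1 g)) - t/g = 0).
      { unfold q_tax, q_bau, E_bau, varrho. field. lra. }
      rewrite A1, A2. ring. }
    split; [|split; [|split]].
    + split; [exact Hq | lra].
    + intros q a0 _. rewrite Wq, wt_eq. apply bound; lra.
    + exact Em.
    + exact Wq.
Qed.

Theorem proposition2p3 (pi0 pi1 gamma tau lambda P : R) :
  0 < pi0 -> 0 < pi1 -> 0 < gamma -> 0 < tau -> 0 < lambda ->
  tau * varrho pi1 gamma < E_bau pi0 pi1 ->
  lambda * varrho pi1 gamma < E_bau pi0 pi1 ->
  0 < P -> P < lambda ->
  (* Tax scheme *)
  (let q_tax := q_bau pi0 pi1 - tau / pi1 in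
   (exists a_tax : R, exp (- a_tax) = (E_bau pi0 pi1 - tau * varrho pi1 gamma) / q_tax) /\
   forall a_tax : R,
     exp (- a_tax) = (E_bau pi0 pi1 - tau * varrho pi1 gamma) / q_tax ->
     admissible_tax pi0 pi1 gamma tau q_tax a_tax /\
     (forall q a : R, admissible_tax pi0 pi1 gamma tau q a ->
        wealth_tax pi0 pi1 gamma tau q a <= wealth_tax pi0 pi1 gamma tau q_tax a_tax) /\
     emissions q_tax a_tax = E_bau pi0 pi1 - tau * varrho pi1 gamma /\
     wealth_tax pi0 pi1 gamma tau q_tax a_tax
       = W_bau pi0 pi1 - tau * (E_bau pi0 pi1 - tau / 2 * varrho pi1 gamma)) /\
  (* Market scheme *)
  (let q_mar := q_bau pi0 pi1 - P / pi1 in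
   let delta_mar := E_bau pi0 pi1 - P * varrho pi1 gamma in
   (exists a_mar : R, exp (- a_mar) = (E_bau pi0 pi1 - P * varrho pi1 gamma) / q_mar) /\
   forall a_mar : R,
     exp (- a_mar) = (E_bau pi0 pi1 - P * varrho pi1 gamma) / q_mar ->
     admissible_mar pi0 pi1 gamma P lambda q_mar a_mar delta_mar /\
     (forall q a delta : R, admissible_mar pi0 pi1 gamma P lambda q a delta ->
        wealth_mar pi0 pi1 gamma P lambda q a delta
        <= wealth_mar pi0 pi1 gamma P lambda q_mar a_mar delta_mar) /\
     emissions q_mar a_mar = E_bau pi0 pi1 - P * varrho pi1 gamma /\
     emissions q_mar a_mar = delta_mar /\
     wealth_mar pi0 pi1 gamma P lambda q_mar a_mar delta_mar
       = W_bau pi0 pi1 - P * (E_bau pi0 pi1 - P / 2 * varrho pi1 gamma)).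
Proof.
  intros H0 H1 Hg Ht Hl Htv Hlv HP HPl.
  assert (HPv : P * varrho pi1 gamma < E_bau pi0 pi1).
  { assert (0 < varrho pi1 gamma).
    { unfold varrho. assert (0 < 1/pi1) by (apply Rdiv_lt_0_compat; lra).
      assert (0 < 1/gamma) by (apply Rdiv_lt_0_compat; lra). lra. }
    nra. }
  split.
  - apply tax_part; assumption.
  - intros q_mar delta_mar.
    destruct (tax_part pi0 pi1 gamma P H0 H1 Hg HP HPv) as [Hex Hall].
    split; [exact Hex|].
    intros a Ha. destruct (Hall a Ha) as [[Hq Hw] [Hb [Em Wq]]].
    assert (Wm : wealth_mar pi0 pi1 gamma P lambda q_mar a delta_mar
       = wealth_tax pi0 pi1 gamma P q_mar a).
    { unfold wealth_mar, wealth_tax, pos_part.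
      unfold delta_mar, q_mar. unfold q_mar in Em. rewrite Em.
      rewrite Rminus_diag, Rmax_left by lra. ring. }
    split; [|split; [|split; [|split]]].
    + split; [exact Hq|]. rewrite Wm. exact Hw.
    + intros q a0 d [Hq0 Hw0]. rewrite Wm.
      apply Rle_trans with (wealth_tax pi0 pi1 gamma P q a0).
      * apply wm_le; lra.
      * apply Hb. split; [exact Hq0|].
        pose proof (wm_le pi0 pi1 gamma P lambda q a0 d HP HPl). lra.
    + exact Em.
    + exact Em.
    + rewrite Wm. exact Wq.
Qed.
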